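(* Let $d\geq1$ be an integer and, for real $n>d/2$ and $u\in[0,+\infty)$, let $$\mathscr B_{nd}(u):=(1+4u)^n\int_0^{1/4}ds\,\frac{s^{n-1}}{\sqrt{1-s}\,(1+us)^{2n-d/2}},\qquad B_{nd}:=\sup_{u\in[0,+\infty)}\mathscr B_{nd}(u).$$ Then, for fixed $d$ and $n\to+\infty$, $B_{nd}=O\big(n^{-1/2}(9/8)^n\big)$. *)

(* Defs.v *)
From Stdlib Require Import Reals.
From Coquelicot Require Import Coquelicot.
Open Scope R_scope.

Definition integrand (n : R) (d : nat) (u s : R) : R :=
  Rpower s (n - 1) / (sqrt (1 - s) * Rpower (1 + u * s) (2 * n - INR d / 2)).

Definition Bscr (n : R) (d : nat) (u : R) : R :=
  Rpower (1 + 4 * u) n * RInt (integrand n d u) 0 (1 / 4).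

Definition Bnd (n : R) (d : nat) : Rbar :=
  Lub_Rbar (fun y => exists u, 0 <= u /\ y = Bscr n d u).

(* Main.v *)
Require Import Defs.
From Stdlib Require Import Reals Lra.
From Coquelicot Require Import Coquelicot.
Open Scope R_scope.

Definition phi (a s : R) : R := if Rlt_dec 0 s then Rpower s a else 0.

Lemma ln_le_sub1 x : 0 < x -> ln x <= x - 1.
Proof. intros Hx. pose proof (exp_ineq1_le (ln x)). rewrite exp_ln in H; lra. Qed.

Lemma exp_le' x y : x <= y -> exp x <= exp y.
Proof. intros [H|H]; [left; apply exp_increasing; auto| subst; lra]. Qed.

Lemma Rpower_le_self s a : 0 < s < 1 -> 1 <= a -> Rpower s a <= s.
Proof.
  intros Hs Ha. unfold Rpower.
  assert (ln s < 0) by (rewrite <- ln_1; apply ln_increasing; lra).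
  rewrite <- (exp_ln s) at 2 by lra. apply exp_le'. nra.
Qed.

Lemma phi_cont a c : 1 <= a -> continuous (phi a) c.
Proof.
  intros Ha.
  destruct (Rlt_le_dec 0 c) as [Hc|Hc].
  - apply (filterlim_ext_loc (fun s => exp (a * ln s))).
    + exists (mkposreal c Hc). intros y Hy. unfold phi.
      unfold ball in Hy; simpl in Hy; unfold AbsRing_ball, abs, minus, plus, opp in Hy; simpl in Hy.
      apply Rabs_def2 in Hy. destruct (Rlt_dec 0 y); [reflexivity| lra].
    + replace (phi a c) with (exp (a * ln c)) by (unfold phi; destruct (Rlt_dec 0 c); [reflexivity|lra]).
      apply (continuous_exp_comp (fun s => a * ln s)). apply (@ex_derive_continuous R_AbsRing R_NormedModule). auto_derive. lra.
  - destruct (Rlt_le_dec c 0) as [Hc'|Hc'].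
    + apply (filterlim_ext_loc (fun s => 0)).
      * assert (Hp: 0 < - c) by lra. exists (mkposreal (-c) Hp). intros y Hy. unfold phi.
        unfold ball in Hy; simpl in Hy; unfold AbsRing_ball, abs, minus, plus, opp in Hy; simpl in Hy.
        apply Rabs_def2 in Hy. destruct (Rlt_dec 0 y); [lra| reflexivity].
      * replace (phi a c) with 0 by (unfold phi; destruct (Rlt_dec 0 c); [lra|reflexivity]). apply filterlim_const.
    + assert (c = 0) by lra. subst c.
      apply filterlim_locally. intros eps.
      assert (He: 0 < Rmin 1 eps) by (apply Rmin_glb_lt; [lra| apply cond_pos]).
      exists (mkposreal _ He). intros y Hy.
      unfold ball in Hy |- *; simpl in Hy |- *; unfold AbsRing_ball, abs, minus, plus, opp in Hy |- *; simpl in Hy |- *.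
      unfold phi. destruct (Rlt_dec 0 0) as [h|_]; [lra|].
      rewrite Ropp_0, Rplus_0_r in *.
      pose proof (Rmin_l 1 eps). pose proof (Rmin_r 1 eps).
      destruct (Rlt_dec 0 y).
      * rewrite Rabs_pos_eq in Hy by lra. pose proof (Rpower_le_self y a ltac:(lra) Ha).
        assert (0 < Rpower y a) by (unfold Rpower; apply exp_pos).
        rewrite Rabs_pos_eq by lra. lra.
      * rewrite Rabs_R0. apply cond_pos.
Qed.

Lemma key_id s P A k D : 0 < s -> 0 < P -> 0 < A ->
  Rpower s (k + D) * Rpower P (k + D + 1) / Rpower A (2 * k + D + 2) =
  Rpower (s * P / (A * A)) k * Rpower (s * P / A) D * (P / (A * A)).
Proof.
  intros Hs HP HA.
  assert (E: P / (A * A) = exp (ln P - (ln A + ln A))).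
  { unfold Rminus. rewrite exp_plus, exp_Ropp, exp_plus, !exp_ln by auto. reflexivity. }
  rewrite E. unfold Rpower, Rdiv.
  rewrite !ln_mult; try (apply Rmult_lt_0_compat || apply Rinv_0_lt_compat); auto;
    try (apply Rmult_lt_0_compat; auto).
  rewrite !ln_Rinv; try (apply Rmult_lt_0_compat; auto); auto.
  rewrite !ln_mult by auto.
  rewrite <- !exp_Ropp, <- !exp_plus.
  f_equal. ring.
Qed.

Lemma Rpower_pos x y : 0 < Rpower x y.
Proof. unfold Rpower; apply exp_pos. Qed.

Lemma point_bound (n : R) (d : nat) u s : 0 <= u -> 0 < s < 1/4 -> INR d / 2 + 1 <= n ->
  Rpower (1 + 4 * u) n * integrand n d u s <=
  2 * Rpower 5 (INR d / 2) * Rpower (16/15) (n - 1 - INR d / 2) * ((1 + 4 * u) / ((1 + u * s) * (1 + u * s))).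
Proof.
  intros Hu Hs Hn. set (D := INR d / 2) in *. set (k := n - 1 - D).
  set (P := 1 + 4 * u). set (A := 1 + u * s).
  assert (HP: 0 < P) by (unfold P; lra). assert (HA: 1 <= A) by (unfold A; nra).
  assert (HD: 0 <= D) by (unfold D; pose proof (pos_INR d); lra).
  unfold integrand. fold D. fold A.
  assert (Eq: Rpower P n * (Rpower s (n - 1) / (sqrt (1 - s) * Rpower A (2 * n - D)))
     = (Rpower s (k + D) * Rpower P (k + D + 1) / Rpower A (2 * k + D + 2)) * / sqrt (1 - s)).
  { replace (k + D + 1) with n by (unfold k; ring).
    replace (k + D) with (n - 1) by (unfold k; ring).
    replace (2 * k + D + 2) with (2 * n - D) by (unfold k; ring).
    assert (0 < sqrt (1 - s)) by (apply sqrt_lt_R0; lra).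
    pose proof (Rpower_pos A (2 * n - D)).
    field. split; lra. }
  fold P. rewrite Eq, key_id by lra.
  assert (Hsq: / sqrt (1 - s) <= 2).
  { assert (1/2 <= sqrt (1 - s)).
    { rewrite <- (sqrt_square (1/2)) by lra. apply sqrt_le_1_alt. lra. }
    rewrite <- (Rinv_inv 2). apply Rinv_le_contravar; lra. }
  assert (Hr: 0 < s * P / (A * A)) by (apply Rdiv_lt_0_compat; nra).
  assert (Hr2: s * P / (A * A) <= 16/15).
  { apply Rmult_le_reg_r with (A * A); [nra|]. unfold Rdiv. rewrite Rmult_assoc, Rinv_l by nra.
    unfold P, A. rewrite Rmult_1_r. pose proof (pow2_ge_0 (4 * (u * s) - 7/2)). nra. }
  assert (Hq: 0 < s * P / A) by (apply Rdiv_lt_0_compat; nra).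
  assert (Hq2: s * P / A <= 5).
  { apply Rmult_le_reg_r with A; [nra|]. unfold Rdiv. rewrite Rmult_assoc, Rinv_l by nra.
    unfold P, A. nra. }
  assert (Hk: 0 <= k) by (unfold k; lra).
  pose proof (Rle_Rpower_l _ _ _ Hk (conj Hr Hr2)).
  pose proof (Rle_Rpower_l _ _ _ HD (conj Hq Hq2)).
  pose proof (Rpower_pos (s * P / (A * A)) k).
  pose proof (Rpower_pos (s * P / A) D).
  assert (0 < P / (A * A)) by (apply Rdiv_lt_0_compat; nra).
  assert (0 < / sqrt (1 - s)) by (apply Rinv_0_lt_compat, sqrt_lt_R0; lra).
  set (X := Rpower (s * P / (A * A)) k) in *.
  set (Y := Rpower (s * P / A) D) in *.
  set (Z := / sqrt (1 - s)) in *.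
  set (W := P / (A * A)) in *.
  assert (X * Y <= Rpower (16/15) k * Rpower 5 D) by (apply Rmult_le_compat; lra).
  assert (X * Y * W <= Rpower (16/15) k * Rpower 5 D * W) by (apply Rmult_le_compat_r; lra).
  assert (X * Y * W * Z <= Rpower (16/15) k * Rpower 5 D * W * 2).
  { apply Rmult_le_compat; try lra. apply Rmult_le_pos; [|lra]. apply Rmult_le_pos; lra. }
  unfold W in *. lra.
Qed.

Lemma Bscr_bound (n : R) (d : nat) u : 0 <= u -> INR d / 2 + 2 <= n ->
  Bscr n d u <= 8 * Rpower 5 (INR d / 2) * Rpower (16/15) (n - 1 - INR d / 2).
Proof.
  intros Hu Hn. set (D := INR d / 2) in *.
  assert (HD: 0 <= D) by (unfold D; pose proof (pos_INR d); lra).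
  set (K := 2 * Rpower 5 D * Rpower (16/15) (n - 1 - D)).
  set (P := 1 + 4 * u).
  set (Gc := fun s => phi (n - 1) s * / (sqrt (1 - s) * exp ((2 * n - D) * ln (1 + u * s)))).
  assert (HG: ex_RInt Gc 0 (1/4)).
  { apply (@ex_RInt_continuous R_CompleteNormedModule). rewrite Rmin_left, Rmax_right by lra. intros z Hz.
    apply (@continuous_mult _ R_AbsRing). apply phi_cont; lra.
    apply continuous_Rinv_comp.
    - apply (@ex_derive_continuous R_AbsRing R_NormedModule). auto_derive. repeat split; auto. all: try lra. all: try nra.
    - apply Rgt_not_eq, Rmult_lt_0_compat. apply sqrt_lt_R0; lra. apply exp_pos. }
  assert (HI: ex_RInt (integrand n d u) 0 (1/4)).
  { apply (ex_RInt_ext Gc); [|exact HG]. rewrite Rmin_left, Rmax_right by lra. intros x Hx.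
    unfold Gc, integrand, phi. fold D. destruct (Rlt_dec 0 x); [|lra]. unfold Rpower at 2. reflexivity. }
  set (g := fun s => K * (P / ((1 + u * s) * (1 + u * s)))).
  set (F := fun s => K * (P * s / (1 + u * s))).
  assert (Hg: is_RInt g 0 (1/4) (minus (F (1/4)) (F 0))).
  { apply (@is_RInt_derive R_CompleteNormedModule); rewrite Rmin_left, Rmax_right by lra; intros x Hx.
    - unfold F, g. auto_derive. nra. field. nra.
    - apply (@ex_derive_continuous R_AbsRing R_NormedModule). unfold g. auto_derive. nra. }
  assert (Hval: minus (F (1/4)) (F 0) <= 4 * K).
  { unfold minus, plus, opp; simpl. unfold F.
    assert (0 <= K) by (unfold K; pose proof (Rpower_pos 5 D); pose proof (Rpower_pos (16/15) (n-1-D)); nra).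
    replace (K * (P * 0 / (1 + u * 0))) with 0 by field.
    assert (P * (1/4) / (1 + u * (1/4)) <= 4).
    { apply Rmult_le_reg_r with (1 + u * (1/4)); [lra|]. unfold Rdiv. rewrite Rmult_assoc, Rinv_l by lra.
      unfold P; lra. }
    nra. }
  unfold Bscr. fold P.
  assert (ES: Rpower P n * RInt (integrand n d u) 0 (1/4) = RInt (fun s => Rpower P n * integrand n d u s) 0 (1/4)).
  { symmetry. exact (RInt_scal (integrand n d u) 0 (1/4) (Rpower P n) HI). }
  rewrite ES.
  apply Rle_trans with (RInt g 0 (1/4)).
  - apply RInt_le. lra.
    + exact (ex_RInt_scal (integrand n d u) 0 (1/4) (Rpower P n) HI).
    + exists (minus (F (1/4)) (F 0)). exact Hg.
    + intros x Hx. assert (Hn1 : INR d / 2 + 1 <= n) by (unfold D in Hn; lra). exact (point_bound n d u x Hu Hx Hn1).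
  - rewrite (is_RInt_unique _ _ _ _ Hg). unfold K in Hval. lra.
Qed.

Lemma final_ineq n : 1 <= n ->
  Rpower (16/15) n <= exp ((ln 10 - 1) / 2) * Rpower n (- (1 / 2)) * Rpower (9 / 8) n.
Proof.
  intros Hn. unfold Rpower. rewrite <- !exp_plus. apply exp_le'.
  assert (E1: ln (16/15) = ln (9/8) + ln (128/135)).
  { rewrite <- ln_mult by lra. f_equal. field. }
  pose proof (ln_le_sub1 (128/135) ltac:(lra)).
  assert (E2: ln (n / 10) = ln n - ln 10).
  { unfold Rdiv. rewrite ln_mult, ln_Rinv by lra. ring. }
  pose proof (ln_le_sub1 (n/10) ltac:(lra)).
  rewrite E1. nra.
Qed.

Theorem lemma4p3 (d : nat) (hd : (1 <= d)%nat) :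
  exists C N : R, forall n : R, N <= n -> INR d / 2 < n ->
    Rbar_le (Bnd n d) (Finite (C * Rpower n (- (1 / 2)) * Rpower (9 / 8) n)).
Proof.
  exists (8 * Rpower 5 (INR d / 2) * exp ((ln 10 - 1) / 2)), (INR d / 2 + 2).
  intros n Hn _.
  assert (HD: 0 <= INR d / 2) by (pose proof (pos_INR d); lra).
  unfold Bnd. destruct (Lub_Rbar_correct (fun y => exists u, 0 <= u /\ y = Bscr n d u)) as [_ Hl].
  apply Hl. intros y [u [Hu ->]]. simpl.
  eapply Rle_trans; [apply (Bscr_bound n d u Hu Hn)|].
  pose proof (Rle_Rpower (16/15) (n - 1 - INR d / 2) n ltac:(lra) ltac:(lra)).
  pose proof (final_ineq n ltac:(lra)).
  pose proof (Rpower_pos 5 (INR d / 2)).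
  nra.
Qed.
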